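(* Let $n\ge1$, $\bar M_0=\{u\in\mathbb{C}^{n+2}\mid u_1\cdots u_{n+2}=1,\ u_1+\cdots+u_{n+2}=0\}$, and $\varpi:\bar M_0\to\mathbb{C}^\times$, $\varpi(u)=u_1$. The critical values of $\varpi$ are exactly the $n+2$ solutions $u_1$ of the equation $$u_1^{n+2}=(-1)^{n+1}(n+1)^{n+1}.$$ *)

(* Defs.v *)
(* The complex numbers are modelled by an arbitrary
   numClosedFieldType C (algebraically closed field of char 0 with a
   complex-like norm structure); this includes algC and complex R. *)
From mathcomp Require Import all_boot all_order all_algebra.
Set Implicit Arguments. Unset Strict Implicit. Unset Printing Implicit Defensive.
Import Order.TTheory GRing.Theory Num.Theory.
Local Open Scope ring_scope.

(* Points of C^(n+2) are functions 'I_(n+2) -> C; coordinate u_1 is u ord0. *)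

Definition M0bar (C : numClosedFieldType) (n : nat) (u : 'I_n.+2 -> C) : Prop :=
  \prod_(i < n.+2) u i = 1 /\ \sum_(i < n.+2) u i = 0.

(* Tangent space of M0bar at u: the kernel of the differentials of the two
   defining equations f1 = prod u_i - 1 and f2 = sum u_i
   (d f1 = sum_i (prod_{j<>i} u_j) du_i,  d f2 = sum_i du_i). *)
Definition tangentM0bar (C : numClosedFieldType) (n : nat) (u v : 'I_n.+2 -> C) : Prop :=
  \sum_(i < n.+2) (\prod_(j < n.+2 | j != i) u j) * v i = 0 /\
  \sum_(i < n.+2) v i = 0.

(* The map varpi(u) = u_1 (a linear map, so d varpi (v) = v_1).
   u is a critical point of varpi on M0bar iff d varpi vanishes on the
   tangent space at u. *)
Definition varpi (C : numClosedFieldType) (n : nat) (u : 'I_n.+2 -> C) : C := u ord0.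

Definition critical_point (C : numClosedFieldType) (n : nat) (u : 'I_n.+2 -> C) : Prop :=
  M0bar u /\ forall v : 'I_n.+2 -> C, tangentM0bar u v -> varpi v = 0.

Definition critical_value (C : numClosedFieldType) (n : nat) (c : C) : Prop :=
  exists u : 'I_n.+2 -> C, critical_point u /\ varpi u = c.

(* Main.v *)
Require Import Defs.
From mathcomp Require Import all_boot all_order all_algebra.
From mathcomp Require Import separable.
From mathcomp Require Import ring.
Import Order.TTheory GRing.Theory Num.Theory.
Local Open Scope ring_scope.

Lemma sum_delta (C : numClosedFieldType) m (F : 'I_m -> C) a :
  \sum_(k < m) F k * (k == a)%:R = F a.
Proof.
rewrite (bigD1 a) //= eqxx mulr1 big1 ?addr0 // => k /negbTE ->; exact: mulr0.
Qed.

Lemma sum_delta_c (C : numClosedFieldType) m (x : C) (a : 'I_m) :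
  \sum_(k < m) x * (k == a)%:R = x.
Proof.
rewrite (bigD1 a) //= eqxx mulr1 big1 ?addr0 // => k /negbTE ->; exact: mulr0.
Qed.

Lemma testring (C : numClosedFieldType) n (c w N : C) :
  c = - (w * N) -> c * w ^+ n.+1 = 1 -> c ^+ n.+2 = (-1) ^+ n.+1 * N ^+ n.+1.
Proof.
move=> hc hw. rewrite exprS {2}hc.
transitivity ((c * w^+n.+1) * ((-1)^+n.+1 * N^+n.+1)); last by rewrite hw mul1r.
have E : (w*N)^+n.+1 = w^+n.+1 * N^+n.+1 by exact: exprMn.
rewrite [in LHS]exprNn E.
set a := (-1)^+n.+1; set b := w^+n.+1; set d := N^+n.+1. ring.
Qed.

Lemma crit_forward (C : numClosedFieldType) n (u : 'I_n.+2 -> C) :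
  critical_point u -> u ord0 ^+ n.+2 = (-1) ^+ n.+1 * (n.+1)%:R ^+ n.+1.
Proof.
case=> [[hprod hsum] hcrit].
pose P k := \prod_(j < n.+2 | j != k) u j.
have Pu k : u k * P k = 1 by rewrite -hprod (bigD1 k).
have eqPij i j : i != ord0 -> j != ord0 -> P i = P j.
  move=> hi hj.
  set x := P i - P j; set y := P j - P ord0; set z := P ord0 - P i.
  pose v k := x * (k == ord0)%:R + y * (k == i)%:R + z * (k == j)%:R.
  have : varpi v = 0.
    apply: hcrit; split.
    - have -> : \sum_(k < n.+2) (\prod_(l < n.+2 | l != k) u l) * v k
          = \sum_(k < n.+2) P k * v k by [].
      rewrite /v.
      under eq_bigr do rewrite !mulrDr !mulrA.
      rewrite !big_split /= !sum_delta /x /y /z; ring.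
    - rewrite /v !big_split /= !sum_delta_c /x /y /z; ring.
  rewrite /varpi /v eqxx mulr1 (eq_sym ord0 i) (eq_sym ord0 j).
  rewrite (negbTE hi) (negbTE hj) !mulr0 !addr0 /x => /eqP.
  by rewrite subr_eq0 => /eqP.
have equ i j : i != ord0 -> j != ord0 -> u i = u j.
  move=> hi hj.
  by rewrite -[u i]mulr1 -(Pu j) -(eqPij i j hi hj) mulrCA Pu mulr1.
set w := u (lift ord0 ord0).
have hw k : k != ord0 -> u k = w by move=> hk; apply: equ => //; exact: neq_lift.
rewrite big_ord_recl in hprod; rewrite big_ord_recl in hsum.
have hs : \sum_(i < n.+1) u (lift ord0 i) = w *+ n.+1.
  transitivity (\sum_(i < n.+1) w); last by rewrite sumr_const card_ord.
  by apply: eq_bigr => i _; rewrite hw // neq_lift.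
have hp : \prod_(i < n.+1) u (lift ord0 i) = w ^+ n.+1.
  transitivity (\prod_(i < n.+1) w); last by rewrite prodr_const card_ord.
  by apply: eq_bigr => i _; rewrite hw // neq_lift.
rewrite hs in hsum; rewrite hp in hprod.
apply: (@testring C n _ w) => //.
by apply/eqP; rewrite mulr_natr -addr_eq0 hsum.
Qed.

Lemma K_neq0 (C : numClosedFieldType) n :
  (-1) ^+ n.+1 * (n.+1)%:R ^+ n.+1 != 0 :> C.
Proof. by rewrite mulf_neq0 ?signr_eq0 // expf_neq0 // pnatr_eq0. Qed.

Lemma sign_sq (C : numClosedFieldType) k : (-1) ^+ k * (-1) ^+ k = 1 :> C.
Proof. by rewrite -expr2 -exprM mulnC exprM sqrrN expr1n expr1n. Qed.

Lemma crit_backward (C : numClosedFieldType) n (c : C) :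
  c ^+ n.+2 = (-1) ^+ n.+1 * (n.+1)%:R ^+ n.+1 -> critical_value n c.
Proof.
move=> hc.
have cnz : c != 0.
  apply/eqP => c0; move: (K_neq0 C n); rewrite -hc c0 expr0n /=.
  by rewrite eqxx.
set N : C := (n.+1)%:R.
have Nnz : N != 0 by rewrite pnatr_eq0.
set w := - (c / N).
have wnz : w != 0 by rewrite oppr_eq0 mulf_neq0 ?invr_eq0.
pose u := fun k : 'I_n.+2 => if k == ord0 then c else w.
have ul i : u (lift ord0 i) = w by rewrite /u.
have hprod : \prod_(i < n.+2) u i = 1.
  rewrite big_ord_recl.
  transitivity (c * \prod_(i < n.+1) w).
    by congr (_ * _); apply: eq_bigr => i _; rewrite ul.
  rewrite prodr_const card_ord /w exprNn expr_div_n.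
  have hcb : c * c ^+ n.+1 = (-1) ^+ n.+1 * N ^+ n.+1 by rewrite -exprS.
  set a := (-1) ^+ n.+1; set b := c ^+ n.+1; set d := N ^+ n.+1.
  have dnz : d != 0 by rewrite expf_neq0.
  rewrite mulrCA [c * (b / d)]mulrA hcb mulfK //; exact: sign_sq.
have hsum : \sum_(i < n.+2) u i = 0.
  rewrite big_ord_recl.
  transitivity (c + \sum_(i < n.+1) w).
    by congr (_ + _); apply: eq_bigr => i _; rewrite ul.
  by rewrite sumr_const card_ord -mulr_natr /w mulNr divfK // subrr.
exists u; split; last by rewrite /varpi /u eqxx.
split; first by [].
move=> v [hv1 hv2]; rewrite /varpi.
have Pinv k : \prod_(j < n.+2 | j != k) u j = (u k)^-1.
  have unz : u k != 0 by rewrite /u; case: ifP.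
  have Pu : u k * \prod_(j < n.+2 | j != k) u j = 1.
    by have := hprod; rewrite (bigD1 k).
  by rewrite -[LHS](mulKf unz) Pu mulr1.
have : \sum_(i < n.+2) (u i)^-1 * v i = 0.
  by rewrite -[RHS]hv1; apply: eq_bigr => i _; rewrite Pinv.
rewrite big_ord_recl.
under eq_bigr do rewrite ul.
rewrite -mulr_sumr.
rewrite big_ord_recl in hv2.
have -> : \sum_(i < n.+1) v (lift ord0 i) = - v ord0.
  by apply/eqP; rewrite -addr_eq0 addrC hv2.
rewrite {1}/u eqxx mulrN -mulrBl => /eqP; rewrite mulf_eq0 => /orP [|/eqP //].
rewrite subr_eq0 => /eqP /invr_inj hcw.
have : c * N = - c by rewrite {1}hcw /w mulNr divfK.
move=> /eqP; rewrite -addr_eq0 -{2}[c]mulr1 -mulrDr mulf_eq0 (negbTE cnz) /=.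
by rewrite /N -(natrD _ n.+1 1) addn1 pnatr_eq0.
Qed.

Theorem mainTheorem9 (C : numClosedFieldType) (n : nat) (hn : (1 <= n)%N) :
  (forall c : C, critical_value n c <->
     c ^+ n.+2 = (-1) ^+ n.+1 * (n.+1)%:R ^+ n.+1) /\
  (exists s : seq C, uniq s /\ size s = n.+2 /\
     forall c : C, c \in s <-> critical_value n c).
Proof.
have crit (c : C) : critical_value n c <-> c ^+ n.+2 = (-1) ^+ n.+1 * (n.+1)%:R ^+ n.+1.
  split; last exact: crit_backward.
  by case=> u [hu <-]; exact: crit_forward.
split; first exact: crit.
set K : C := (-1) ^+ n.+1 * (n.+1)%:R ^+ n.+1.
have Knz : K != 0 by exact: K_neq0.
set p : {poly C} := 'X^(n.+2) - K%:P.
have pm : p \is monic by exact: monicXnsubC.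
have [r hr] := closed_field_poly_normal p.
rewrite (monicP pm) scale1r in hr.
exists r; split; [|split].
- rewrite -separable_prod_XsubC -hr.
  rewrite unlock; apply/Bezout_coprimepP.
  exists ((- K^-1)%:P, (((n.+2)%:R * K)^-1)%:P * 'X).
  rewrite /= /p derivB derivXn derivC subr0 /=.
  have mnz : (n.+2)%:R != 0 :> C by rewrite pnatr_eq0.
  have e1 : (- K^-1)%:P * K%:P = -1 :> {poly C}.
    by rewrite -polyCM mulNr mulVf // polyCN.
  have e2 : (((n.+2)%:R * K)^-1)%:P * (n.+2)%:R = (K^-1)%:P :> {poly C}.
    by rewrite -polyC_natr -polyCM invfM mulrAC mulVf ?mul1r.
  have -> : (- K^-1)%:P * ('X^(n.+2) - K%:P) +
      (((n.+2)%:R * K)^-1)%:P * 'X * ('X^(n.+1) *+ n.+2) = 1.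
    have hM : 'X^(n.+1) *+ n.+2 = 'X^(n.+1) * (n.+2)%:R :> {poly C} by rewrite mulr_natr.
    rewrite hM exprS.
    set A := (- K^-1)%:P; set B := (((n.+2)%:R * K)^-1)%:P; set M : {poly C} := (n.+2)%:R.
    set Y : {poly C} := 'X^(n.+1).
    transitivity (A * 'X * Y - A * K%:P + (B * M) * 'X * Y); first ring.
    rewrite e1 e2 /A polyCN. ring.
  exact: eqpxx.
- have := size_XnsubC K (isT : (0 < n.+2)%N).
  by rewrite -/p hr size_prod_XsubC => [[]].
- move=> c.
  have hroot : (c \in r) = (c ^+ n.+2 == K).
    by rewrite -root_prod_XsubC -hr /p /root !hornerE subr_eq0.
  rewrite hroot; split => [/eqP h|h]; first exact/crit.
  by apply/eqP/crit.
Qed.
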